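(* Let $\Delta$ be a thick building with Weyl group $W$, and let $G$ be a group acting strongly transitively on $\Delta$ with respect to the complete apartment system $\overline{\mathcal{A}}$. Fix an apartment $\Sigma_0\in\overline{\mathcal{A}}$, let $N=\mathrm{Stab}_G(\Sigma_0)$ and $T=\{t\in N \mid tC=C \text{ for all chambers } C \text{ of } \Sigma_0\}$. Then for a subgroup $H$ of $G$ the following are equivalent: (i) $H$ acts weakly transitively on $\Delta$; (ii) there exists $g\in G$ such that $g(nT)g^{-1}\cap H\neq\emptyset$ for all $n\in N$.
   Context: For a thick building $\Delta$ with Coxeter system $(W,S)$ of finite rank, $\overline{\mathcal{A}}$ denotes its complete system of apartments. A subset $\mathcal{A}\subseteq\overline{\mathcal{A}}$ is a system of apartments if any two chambers lie in a common apartment of $\mathcal{A}$. A type-preserving action of a group $H$ on $\Delta$ is strongly transitive with respect to $\mathcal{A}$ if $H$ acts transitively on $\{(C,\Sigma)\mid \Sigma\in\mathcal{A},\ C \text{ a chamber of }\Sigma\}$. A type-preserving action of $H$ on $\Delta$ is called weakly transitive if there exists an apartment $\Sigma\in\overline{\mathcal{A}}$ such that $\mathrm{Stab}_H(\Sigma)$ acts transitively on the chambers of $\Sigma$. (Note $N/T$ identifies with $W$, the type-preserving automorphism group of $\Sigma_0$.) *)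

(* Defs.v *)
(* abstract (possibly infinite) groups, Coxeter systems and
   buildings in the W-metric (W-distance) formulation (Abramenko-Brown, Ch. 5). *)
From Stdlib Require Import List.
Import ListNotations.
Set Implicit Arguments.
Unset Strict Implicit.

Record Grp := {
  gcar :> Type;
  gmul : gcar -> gcar -> gcar;
  ginv : gcar -> gcar;
  gone : gcar;
  gmulA : forall x y z, gmul x (gmul y z) = gmul (gmul x y) z;
  gmul1 : forall x, gmul gone x = x;
  gmulV : forall x, gmul (ginv x) x = gone
}.
Arguments gmul {g}.
Arguments ginv {g}.
Arguments gone {g}.

Fixpoint gpow (G : Grp) (x : G) (n : nat) : G :=
  match n with O => gone | S n => gmul x (gpow x n) end.

Definition is_hom (G H : Grp) (f : G -> H) : Prop :=
  forall x y, f (gmul x y) = gmul (f x) (f y).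

Definition is_subgroup (G : Grp) (H : G -> Prop) : Prop :=
  H gone /\ (forall x y, H x -> H y -> H (gmul x y)) /\ (forall x, H x -> H (ginv x)).

(* (W,S) is a Coxeter system iff W has the presentation
   < S | (s t)^{m(s,t)} = 1 > with m(s,t) the order of st, i.e. every map f from S
   to a group satisfying all relations (f s f t)^n = 1 whenever (s t)^n = 1 in W
   extends uniquely to a homomorphism W -> H. *)
Definition coxeter_system (W : Grp) (S : W -> Prop) : Prop :=
  (forall s, S s -> s <> gone /\ gmul s s = gone) /\
  (forall (H : Grp) (f : W -> H),
     (forall s t n, S s -> S t -> gpow (gmul s t) n = gone ->
                    gpow (gmul (f s) (f t)) n = gone) ->
     (exists phi : W -> H, is_hom phi /\ forall s, S s -> phi s = f s) /\
     (forall phi psi : W -> H, is_hom phi -> is_hom psi ->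
        (forall s, S s -> phi s = psi s) -> forall w, phi w = psi w)).

Definition finite_rank (W : Grp) (S : W -> Prop) : Prop :=
  exists l : list W, forall s, S s <-> In s l.

Definition word_prod (W : Grp) (l : list W) : W := fold_right gmul gone l.

Definition is_length (W : Grp) (S : W -> Prop) (w : W) (n : nat) : Prop :=
  (exists l, length l = n /\ Forall S l /\ word_prod l = w) /\
  (forall l, Forall S l -> word_prod l = w -> n <= length l).

Definition is_building (W : Grp) (S : W -> Prop) (Ch : Type) (delta : Ch -> Ch -> W)
  : Prop :=
  (forall C D, delta C D = gone <-> C = D) /\
  (forall C D C' s, S s -> delta C' C = s ->
     (delta C' D = gmul s (delta C D) \/ delta C' D = delta C D) /\
     ((exists n, is_length S (delta C D) n /\
                 is_length S (gmul s (delta C D)) (Datatypes.S n)) ->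
      delta C' D = gmul s (delta C D))) /\
  (forall C D s, S s -> exists C', delta C' C = s /\ delta C' D = gmul s (delta C D)).

(* thick: every panel contains at least three chambers *)
Definition thick (W : Grp) (S : W -> Prop) (Ch : Type) (delta : Ch -> Ch -> W) : Prop :=
  forall C s, S s -> exists D1 D2, D1 <> D2 /\ delta C D1 = s /\ delta C D2 = s.

(* apartments of the complete apartment system: images of isometries W -> Ch *)
Definition apartment (W : Grp) (Ch : Type) (delta : Ch -> Ch -> W) (Sigma : Ch -> Prop)
  : Prop :=
  exists phi : W -> Ch,
    (forall x y, delta (phi x) (phi y) = gmul (ginv x) y) /\
    (forall D, Sigma D <-> exists x, phi x = D).

Definition is_tp_action (W G : Grp) (Ch : Type) (delta : Ch -> Ch -> W)
  (act : G -> Ch -> Ch) : Prop :=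
  (forall C, act gone C = C) /\
  (forall g h C, act (gmul g h) C = act g (act h C)) /\
  (forall g C D, delta (act g C) (act g D) = delta C D).

Definition stabilizes (G : Grp) (Ch : Type) (act : G -> Ch -> Ch) (g : G)
  (Sigma : Ch -> Prop) : Prop :=
  forall D, Sigma D <-> exists E, Sigma E /\ act g E = D.

Definition strongly_transitive (W G : Grp) (Ch : Type) (delta : Ch -> Ch -> W)
  (act : G -> Ch -> Ch) (H : G -> Prop) : Prop :=
  forall C Sigma C' Sigma',
    apartment delta Sigma -> Sigma C -> apartment delta Sigma' -> Sigma' C' ->
    exists h, H h /\ act h C = C' /\
      (forall D, Sigma' D <-> exists E, Sigma E /\ act h E = D).

Definition weakly_transitive (W G : Grp) (Ch : Type) (delta : Ch -> Ch -> W)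
  (act : G -> Ch -> Ch) (H : G -> Prop) : Prop :=
  exists Sigma, apartment delta Sigma /\
    forall C D, Sigma C -> Sigma D ->
      exists h, H h /\ stabilizes act h Sigma /\ act h C = D.

(* Main.v *)
Require Import Defs.

Section Aux.
Variable G : Grp.

Lemma gcancel (a x y : G) : gmul a x = gmul a y -> x = y.
Proof.
  intro E. rewrite <- (gmul1 x), <- (gmul1 y), <- (gmulV a), <- !gmulA, E. reflexivity.
Qed.

Lemma gmulVr (x : G) : gmul x (ginv x) = gone.
Proof.
  rewrite <- (gmul1 (gmul x (ginv x))).
  rewrite <- (gmulV (ginv x)) at 1.
  rewrite <- gmulA, (gmulA (ginv x) x), gmulV, gmul1. apply gmulV.
Qed.

Lemma gmulr1 (x : G) : gmul x gone = x.
Proof. rewrite <- (gmulV x), gmulA, gmulVr, gmul1. reflexivity. Qed.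
End Aux.

Definition maps (G : Grp) (Ch : Type) (act : G -> Ch -> Ch) (A B : Ch -> Prop) (g : G) :=
  forall D, B D <-> exists E, A E /\ act g E = D.

Arguments maps {G Ch}.

Section Act.
Variables (W G : Grp) (Ch : Type) (delta : Ch -> Ch -> W) (act : G -> Ch -> Ch).
Hypothesis Hact : is_tp_action delta act.

Lemma act_inv (g : G) C : act (ginv g) (act g C) = C.
Proof. destruct Hact as [H1 [H2 H3]]. rewrite <- H2, gmulV, H1. reflexivity. Qed.

Lemma maps_inv A B g : maps act A B g -> maps act B A (ginv g).
Proof.
  intros M D; split.
  - intro HA. exists (act g D). split. apply M. exists D; auto. apply act_inv.
  - intros [E [HE <-]]. apply M in HE. destruct HE as [E' [HE' <-]].
    rewrite act_inv. exact HE'.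
Qed.

Lemma maps_comp A B C g h : maps act A B g -> maps act B C h -> maps act A C (gmul h g).
Proof.
  destruct Hact as [H1 [H2 H3]].
  intros M1 M2 D; split.
  - intro HC. apply M2 in HC. destruct HC as [F [HF <-]].
    apply M1 in HF. destruct HF as [E [HE <-]]. exists E. rewrite H2. auto.
  - intros [E [HE <-]]. rewrite H2. apply M2. exists (act g E). split; auto.
    apply M1. exists E; auto.
Qed.

Lemma rigid Sigma t C0 E : apartment delta Sigma -> maps act Sigma Sigma t ->
  Sigma C0 -> act t C0 = C0 -> Sigma E -> act t E = E.
Proof.
  destruct Hact as [H1 [H2 H3]].
  intros [phi [Hiso Hin]] M HC0 Ht HE.
  assert (HtE : Sigma (act t E)) by (apply M; exists E; auto).
  apply Hin in HC0; apply Hin in HE; apply Hin in HtE.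
  destruct HC0 as [x Hx]; destruct HE as [y Hy]; destruct HtE as [z Hz].
  assert (gmul (ginv x) z = gmul (ginv x) y).
  { rewrite <- !Hiso, Hx, Hy, Hz. rewrite <- Ht at 1. apply H3. }
  apply gcancel in H. rewrite <- Hz, <- Hy, H. reflexivity.
Qed.
End Act.
Arguments act_inv {W G Ch delta act}.
Arguments maps_inv {W G Ch delta act}.
Arguments maps_comp {W G Ch delta act}.
Arguments rigid {W G Ch delta act}.


Theorem lemma2p3 (W : Grp) (S : W -> Prop) (Ch : Type) (delta : Ch -> Ch -> W)
  (G : Grp) (act : G -> Ch -> Ch) (Sigma0 : Ch -> Prop) (H : G -> Prop) :
  coxeter_system S -> finite_rank S ->
  is_building S delta -> thick S delta ->
  is_tp_action delta act ->
  strongly_transitive delta act (fun _ => True) ->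
  apartment delta Sigma0 ->
  is_subgroup H ->
  let N := fun n : G => stabilizes act n Sigma0 in
  let T := fun t : G => N t /\ forall C, Sigma0 C -> act t C = C in
  weakly_transitive delta act H <->
  exists g : G, forall n : G, N n ->
    exists t : G, T t /\ H (gmul g (gmul (gmul n t) (ginv g))).
Proof.
  intros _ _ _ _ Hact Hst Hap Hsub. cbv zeta. unfold stabilizes.
  pose proof Hact as [A1 [A2 A3]].
  assert (Hne' : exists C0, Sigma0 C0).
  { destruct Hap as [phi [_ Hin]]. exists (phi gone). apply Hin. eauto. }
  destruct Hne' as [C0 Hne].
  split.
  - intros [Sigma [HapS Htr]].
    assert (HneS : exists C, Sigma C).
    { destruct HapS as [phi [_ Hin]]. exists (phi gone). apply Hin. eauto. }
    destruct HneS as [C1 HC1].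
    destruct (Hst C0 Sigma0 C1 Sigma Hap Hne HapS HC1) as [g [_ [Hg Mg]]].
    exists g. intros n Hn.
    assert (Hgn : Sigma (act g (act n C0))).
    { apply Mg. exists (act n C0). split; auto. apply Hn. eauto. }
    destruct (Htr _ _ HC1 Hgn) as [h [Hh [Mh HhC]]].
    set (t := gmul (ginv n) (gmul (ginv g) (gmul h g))).
    exists t. split; [split|].
    + change (maps act Sigma0 Sigma0 t).
      unfold t. eapply (maps_comp Hact); [ |apply (maps_inv Hact); exact Hn].
      eapply (maps_comp Hact); [ |apply (maps_inv Hact); exact Mg].
      eapply (maps_comp Hact); [exact Mg|exact Mh].
    + intros C HC. eapply (rigid Hact Sigma0 t C0); auto.
      * change (maps act Sigma0 Sigma0 t).
        unfold t. eapply (maps_comp Hact); [ |apply (maps_inv Hact); exact Hn].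
        eapply (maps_comp Hact); [ |apply (maps_inv Hact); exact Mg].
        eapply (maps_comp Hact); [exact Mg|exact Mh].
      * unfold t. rewrite !A2, Hg, HhC, !act_inv by exact Hact. reflexivity.
    + replace (gmul g (gmul (gmul n t) (ginv g))) with h; auto.
      unfold t. rewrite !gmulA, <- (gmulA g n), gmulVr, gmulr1, gmulVr, gmul1, <- gmulA, gmulVr, gmulr1.
      reflexivity.
  - intros [g Hg].
    exists (fun D => exists E, Sigma0 E /\ act g E = D). split.
    + destruct Hap as [phi [Hiso Hin]]. exists (fun x => act g (phi x)). split.
      * intros x y. rewrite A3. apply Hiso.
      * intro D. split.
        -- intros [E [HE <-]]. apply Hin in HE. destruct HE as [x <-]. eauto.
        -- intros [x <-]. exists (phi x). split; auto. apply Hin; eauto.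
    + intros C D [C' [HC' <-]] [D' [HD' <-]].
      destruct (Hst C' Sigma0 D' Sigma0 Hap HC' Hap HD') as [n [_ [HnC Mn]]].
      destruct (Hg n Mn) as [t [[Mt Ht] Hh]].
      eexists. split; [exact Hh|split].
      * change (maps act (fun D => exists E, Sigma0 E /\ act g E = D)
                 (fun D => exists E, Sigma0 E /\ act g E = D)
                 (gmul g (gmul (gmul n t) (ginv g)))).
        assert (Mg : maps act Sigma0 (fun D => exists E, Sigma0 E /\ act g E = D) g)
          by (intro; tauto).
        eapply (maps_comp Hact); [ |exact Mg].
        eapply (maps_comp Hact); [apply (maps_inv Hact); exact Mg|].
        eapply (maps_comp Hact); [exact Mt|exact Mn].
      * rewrite !A2, act_inv, Ht, HnC by (exact Hact || exact HC'). reflexivity.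
Qed.
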